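(* Let $u$ be a real solution of the sinh-Gordon equation, fix $a\in\mathbb{C}^*$, let $\psi^{(a)}$ be a solution of (Ψ) and $\varphi^{(a)}$ a solution of (Φ), both at $\lambda=a$, and set $\xi_{ij}=\psi^{(a)}_i\varphi^{(a)}_j$ and $\dot u=\xi_{11}-\xi_{22}$. Let $\lambda\in\mathbb{C}^*\setminus\{a\}$ and let $\psi$ be any solution of (Ψ) at $\lambda$. Then $$\dot\psi:=\frac{1}{\lambda-a}\begin{pmatrix}(\lambda+a)\xi_{11}&2\lambda\,\xi_{12}\\ 2a\,\xi_{21}&(\lambda+a)\xi_{22}\end{pmatrix}\psi$$ solves the linearization of (Ψ) in the direction $\dot u$, namely $$\partial\dot\psi=\tfrac12\begin{pmatrix}\partial u& ie^{-u}\\ i\lambda^{-1}e^{u}&-\partial u\end{pmatrix}\dot\psi+\tfrac12\begin{pmatrix}\partial\dot u&-i\dot u e^{-u}\\ i\dot u\lambda^{-1}e^{u}&-\partial\dot u\end{pmatrix}\psi,$$ $$\bar\partial\dot\psi=\tfrac12\begin{pmatrix}-\bar\partial u& i\lambda e^{u}\\ ie^{-u}&\bar\partial u\end{pmatrix}\dot\psi+\tfrac12\begin{pmatrix}-\bar\partial\dot u& i\dot u\lambda e^{u}\\ -i\dot u e^{-u}&\bar\partial\dot u\end{pmatrix}\psi.$$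
   Context: Coordinates $z$ on $\mathbb{R}^2\cong\mathbb{C}$, $\partial=\partial_z$, $\bar\partial=\partial_{\bar z}$. Sinh-Gordon equation: $\partial\bar\partial u+\tfrac12\sinh(2u)=0$, $u$ real smooth. For $\lambda\in\mathbb{C}^*$, system (Ψ) is $\partial\psi=\tfrac12\begin{pmatrix}\partial u& ie^{-u}\\ i\lambda^{-1}e^{u}&-\partial u\end{pmatrix}\psi$, $\bar\partial\psi=\tfrac12\begin{pmatrix}-\bar\partial u& i\lambda e^{u}\\ ie^{-u}&\bar\partial u\end{pmatrix}\psi$, and system (Φ) is $\partial\varphi=-\tfrac12\begin{pmatrix}\partial u& i\lambda^{-1}e^{u}\\ ie^{-u}&-\partial u\end{pmatrix}\varphi$, $\bar\partial\varphi=-\tfrac12\begin{pmatrix}-\bar\partial u& ie^{-u}\\ i\lambda e^{u}&\bar\partial u\end{pmatrix}\varphi$. *)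

(* Defs.v *)
From Stdlib Require Import Reals List.
Open Scope R_scope.

Definition Cplx : Type := (R * R)%type.
Definition RtoC (r : R) : Cplx := (r, 0).
Definition Ci : Cplx := (0, 1).
Definition Cadd (z w : Cplx) : Cplx := (fst z + fst w, snd z + snd w).
Definition Copp (z : Cplx) : Cplx := (- fst z, - snd z).
Definition Csub (z w : Cplx) : Cplx := Cadd z (Copp w).
Definition Cmul (z w : Cplx) : Cplx :=
  (fst z * fst w - snd z * snd w, fst z * snd w + snd z * fst w).
Definition Cinv (z : Cplx) : Cplx :=
  (fst z / (fst z ^ 2 + snd z ^ 2), - snd z / (fst z ^ 2 + snd z ^ 2)).
Definition Cdiv (z w : Cplx) : Cplx := Cmul z (Cinv w).

Declare Scope C_scope.
Delimit Scope C_scope with C.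
Infix "+" := Cadd : C_scope.
Infix "-" := Csub : C_scope.
Infix "*" := Cmul : C_scope.
Infix "/" := Cdiv : C_scope.
Notation "- z" := (Copp z) : C_scope.

Definition half : Cplx := RtoC (1/2).

(* Partial derivatives of a complex-valued function of (x,y) in R^2 = C, z = x + i y. *)
Definition is_dx (f : R -> R -> Cplx) (x y : R) (l : Cplx) : Prop :=
  derivable_pt_lim (fun t => fst (f t y)) x (fst l) /\
  derivable_pt_lim (fun t => snd (f t y)) x (snd l).
Definition is_dy (f : R -> R -> Cplx) (x y : R) (l : Cplx) : Prop :=
  derivable_pt_lim (fun t => fst (f x t)) y (fst l) /\
  derivable_pt_lim (fun t => snd (f x t)) y (snd l).

Definition is_dz (f : R -> R -> Cplx) (x y : R) (l : Cplx) : Prop :=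
  exists fx fy, is_dx f x y fx /\ is_dy f x y fy /\ l = (half * (fx - Ci * fy))%C.
Definition is_dzb (f : R -> R -> Cplx) (x y : R) (l : Cplx) : Prop :=
  exists fx fy, is_dx f x y fx /\ is_dy f x y fy /\ l = (half * (fx + Ci * fy))%C.

Definition cont2 (g : R -> R -> R) : Prop :=
  forall x y eps, 0 < eps -> exists delta, 0 < delta /\
    forall x' y', Rabs (x' - x) < delta -> Rabs (y' - y) < delta ->
      Rabs (g x' y' - g x y) < eps.

(* Smooth (C^infinity) real function on R^2: a family D indexed by words over
   {x (false), y (true)} of iterated partial derivatives, all continuous. *)
Definition smooth2 (u : R -> R -> R) : Prop :=
  exists D : list bool -> R -> R -> R,
    D nil = u /\
    (forall w, cont2 (D w)) /\
    (forall w x y, derivable_pt_lim (fun t => D w t y) x (D (false :: w) x y)) /\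
    (forall w x y, derivable_pt_lim (fun t => D w x t) y (D (true :: w) x y)).

Definition Cfun (u : R -> R -> R) : R -> R -> Cplx := fun x y => RtoC (u x y).

(* Sinh-Gordon: d dbar u + (1/2) sinh(2u) = 0. *)
Definition sinh_gordon (u : R -> R -> R) : Prop :=
  exists g : R -> R -> Cplx,
    (forall x y, is_dzb (Cfun u) x y (g x y)) /\
    (forall x y, is_dz g x y (RtoC (- (1/2) * sinh (2 * u x y)))).

Definition eu (u : R -> R -> R) x y : Cplx := RtoC (exp (u x y)).
Definition emu (u : R -> R -> R) x y : Cplx := RtoC (exp (- u x y)).

Definition PsiSys (u : R -> R -> R) (lam : Cplx) (p1 p2 : R -> R -> Cplx) : Prop :=
  forall x y, exists du dbu,
    is_dz (Cfun u) x y du /\ is_dzb (Cfun u) x y dbu /\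
    is_dz p1 x y (half * (du * p1 x y + Ci * emu u x y * p2 x y))%C /\
    is_dz p2 x y (half * (Ci * Cinv lam * eu u x y * p1 x y - du * p2 x y))%C /\
    is_dzb p1 x y (half * (- dbu * p1 x y + Ci * lam * eu u x y * p2 x y))%C /\
    is_dzb p2 x y (half * (Ci * emu u x y * p1 x y + dbu * p2 x y))%C.

Definition PhiSys (u : R -> R -> R) (lam : Cplx) (q1 q2 : R -> R -> Cplx) : Prop :=
  forall x y, exists du dbu,
    is_dz (Cfun u) x y du /\ is_dzb (Cfun u) x y dbu /\
    is_dz q1 x y (- (half * (du * q1 x y + Ci * Cinv lam * eu u x y * q2 x y)))%C /\
    is_dz q2 x y (- (half * (Ci * emu u x y * q1 x y - du * q2 x y)))%C /\
    is_dzb q1 x y (- (half * (- dbu * q1 x y + Ci * emu u x y * q2 x y)))%C /\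
    is_dzb q2 x y (- (half * (Ci * lam * eu u x y * q1 x y + dbu * q2 x y)))%C.

(* Main.v *)
Require Import Defs.
From Stdlib Require Import Reals Lra Ring Field BinNat.
Open Scope R_scope.

Lemma dl_eq f x l l' : derivable_pt_lim f x l -> l = l' -> derivable_pt_lim f x l'.
Proof. intros H ->; exact H. Qed.

Lemma dl_mul f g x lf lg : derivable_pt_lim f x lf -> derivable_pt_lim g x lg ->
  derivable_pt_lim (fun t => f t * g t) x (lf * g x + f x * lg).
Proof. intros; apply (derivable_pt_lim_mult f g); auto. Qed.
Lemma dl_add f g x lf lg : derivable_pt_lim f x lf -> derivable_pt_lim g x lg ->
  derivable_pt_lim (fun t => f t + g t) x (lf + lg).
Proof. intros; apply (derivable_pt_lim_plus f g); auto. Qed.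
Lemma dl_sub f g x lf lg : derivable_pt_lim f x lf -> derivable_pt_lim g x lg ->
  derivable_pt_lim (fun t => f t - g t) x (lf - lg).
Proof. intros; apply (derivable_pt_lim_minus f g); auto. Qed.
Lemma dl_opp f x lf : derivable_pt_lim f x lf ->
  derivable_pt_lim (fun t => - f t) x (- lf).
Proof. intros; apply (derivable_pt_lim_opp f); auto. Qed.
Lemma dl_cst k x : derivable_pt_lim (fun _ => k) x 0.
Proof. apply (derivable_pt_lim_const k). Qed.

Lemma dx_mul f g x y lf lg : is_dx f x y lf -> is_dx g x y lg ->
  is_dx (fun x y => (f x y * g x y)%C) x y (lf * g x y + f x y * lg)%C.
Proof.
  intros [H1 H2] [H3 H4]; split; unfold Cmul, Cadd; simpl.
  - eapply dl_eq. apply dl_sub; apply dl_mul; eauto. cbv beta; ring.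
  - eapply dl_eq. apply dl_add; apply dl_mul; eauto. cbv beta; ring.
Qed.
Lemma dy_mul f g x y lf lg : is_dy f x y lf -> is_dy g x y lg ->
  is_dy (fun x y => (f x y * g x y)%C) x y (lf * g x y + f x y * lg)%C.
Proof.
  intros [H1 H2] [H3 H4]; split; unfold Cmul, Cadd; simpl.
  - eapply dl_eq. apply dl_sub; apply dl_mul; eauto. cbv beta; ring.
  - eapply dl_eq. apply dl_add; apply dl_mul; eauto. cbv beta; ring.
Qed.
Lemma dx_add f g x y lf lg : is_dx f x y lf -> is_dx g x y lg ->
  is_dx (fun x y => (f x y + g x y)%C) x y (lf + lg)%C.
Proof. intros [H1 H2] [H3 H4]; split; unfold Cadd; simpl; apply dl_add; auto. Qed.
Lemma dy_add f g x y lf lg : is_dy f x y lf -> is_dy g x y lg ->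
  is_dy (fun x y => (f x y + g x y)%C) x y (lf + lg)%C.
Proof. intros [H1 H2] [H3 H4]; split; unfold Cadd; simpl; apply dl_add; auto. Qed.
Lemma dx_sub f g x y lf lg : is_dx f x y lf -> is_dx g x y lg ->
  is_dx (fun x y => (f x y - g x y)%C) x y (lf - lg)%C.
Proof. intros [H1 H2] [H3 H4]; split; unfold Csub, Cadd, Copp; simpl;
  eapply dl_eq; [apply dl_add; [eauto|apply dl_opp; eauto] | cbv beta; ring | apply dl_add; [eauto|apply dl_opp; eauto] | cbv beta; ring]. Qed.
Lemma dy_sub f g x y lf lg : is_dy f x y lf -> is_dy g x y lg ->
  is_dy (fun x y => (f x y - g x y)%C) x y (lf - lg)%C.
Proof. intros [H1 H2] [H3 H4]; split; unfold Csub, Cadd, Copp; simpl;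
  eapply dl_eq; [apply dl_add; [eauto|apply dl_opp; eauto] | cbv beta; ring | apply dl_add; [eauto|apply dl_opp; eauto] | cbv beta; ring]. Qed.
Lemma dx_cst (k : Cplx) x y : is_dx (fun _ _ => k) x y (RtoC 0).
Proof. split; simpl; apply dl_cst. Qed.
Lemma dy_cst (k : Cplx) x y : is_dy (fun _ _ => k) x y (RtoC 0).
Proof. split; simpl; apply dl_cst. Qed.

Ltac ceq := repeat match goal with z : Cplx |- _ => destruct z end;
  unfold Csub, Cmul, Cadd, Copp, half, Ci, RtoC; simpl; f_equal; ring.

Lemma dz_mul f g x y lf lg : is_dz f x y lf -> is_dz g x y lg ->
  is_dz (fun x y => (f x y * g x y)%C) x y (lf * g x y + f x y * lg)%C.
Proof.
  intros [fx [fy [H1 [H2 ->]]]] [gx [gy [H3 [H4 ->]]]].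
  eexists; eexists; split; [apply dx_mul; eauto|split; [apply dy_mul; eauto|]].
  generalize (f x y) (g x y); intros; ceq.
Qed.
Lemma dzb_mul f g x y lf lg : is_dzb f x y lf -> is_dzb g x y lg ->
  is_dzb (fun x y => (f x y * g x y)%C) x y (lf * g x y + f x y * lg)%C.
Proof.
  intros [fx [fy [H1 [H2 ->]]]] [gx [gy [H3 [H4 ->]]]].
  eexists; eexists; split; [apply dx_mul; eauto|split; [apply dy_mul; eauto|]].
  generalize (f x y) (g x y); intros; ceq.
Qed.
Lemma dz_add f g x y lf lg : is_dz f x y lf -> is_dz g x y lg ->
  is_dz (fun x y => (f x y + g x y)%C) x y (lf + lg)%C.
Proof.
  intros [fx [fy [H1 [H2 ->]]]] [gx [gy [H3 [H4 ->]]]].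
  eexists; eexists; split; [apply dx_add; eauto|split; [apply dy_add; eauto|]]. ceq.
Qed.
Lemma dzb_add f g x y lf lg : is_dzb f x y lf -> is_dzb g x y lg ->
  is_dzb (fun x y => (f x y + g x y)%C) x y (lf + lg)%C.
Proof.
  intros [fx [fy [H1 [H2 ->]]]] [gx [gy [H3 [H4 ->]]]].
  eexists; eexists; split; [apply dx_add; eauto|split; [apply dy_add; eauto|]]. ceq.
Qed.
Lemma dz_sub f g x y lf lg : is_dz f x y lf -> is_dz g x y lg ->
  is_dz (fun x y => (f x y - g x y)%C) x y (lf - lg)%C.
Proof.
  intros [fx [fy [H1 [H2 ->]]]] [gx [gy [H3 [H4 ->]]]].
  eexists; eexists; split; [apply dx_sub; eauto|split; [apply dy_sub; eauto|]]. ceq.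
Qed.
Lemma dzb_sub f g x y lf lg : is_dzb f x y lf -> is_dzb g x y lg ->
  is_dzb (fun x y => (f x y - g x y)%C) x y (lf - lg)%C.
Proof.
  intros [fx [fy [H1 [H2 ->]]]] [gx [gy [H3 [H4 ->]]]].
  eexists; eexists; split; [apply dx_sub; eauto|split; [apply dy_sub; eauto|]]. ceq.
Qed.
Lemma dz_cst (k : Cplx) x y : is_dz (fun _ _ => k) x y (RtoC 0).
Proof. exists (RtoC 0), (RtoC 0); split; [apply dx_cst|split; [apply dy_cst|]]. ceq. Qed.
Lemma dzb_cst (k : Cplx) x y : is_dzb (fun _ _ => k) x y (RtoC 0).
Proof. exists (RtoC 0), (RtoC 0); split; [apply dx_cst|split; [apply dy_cst|]]. ceq. Qed.
Lemma dz_eq f x y l l' : is_dz f x y l -> l = l' -> is_dz f x y l'.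
Proof. intros H ->; exact H. Qed.
Lemma dzb_eq f x y l l' : is_dzb f x y l -> l = l' -> is_dzb f x y l'.
Proof. intros H ->; exact H. Qed.

Lemma dx_uniq f x y l1 l2 : is_dx f x y l1 -> is_dx f x y l2 -> l1 = l2.
Proof. destruct l1, l2; intros [A B] [C D]; simpl in *;
  rewrite (uniqueness_limite _ _ _ _ A C), (uniqueness_limite _ _ _ _ B D); reflexivity. Qed.
Lemma dy_uniq f x y l1 l2 : is_dy f x y l1 -> is_dy f x y l2 -> l1 = l2.
Proof. destruct l1, l2; intros [A B] [C D]; simpl in *;
  rewrite (uniqueness_limite _ _ _ _ A C), (uniqueness_limite _ _ _ _ B D); reflexivity. Qed.
Lemma dz_uniq f x y l1 l2 : is_dz f x y l1 -> is_dz f x y l2 -> l1 = l2.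
Proof. intros [a [b [A [B ->]]]] [c [d [C [D ->]]]];
  rewrite (dx_uniq _ _ _ _ _ A C), (dy_uniq _ _ _ _ _ B D); reflexivity. Qed.
Lemma dzb_uniq f x y l1 l2 : is_dzb f x y l1 -> is_dzb f x y l2 -> l1 = l2.
Proof. intros [a [b [A [B ->]]]] [c [d [C [D ->]]]];
  rewrite (dx_uniq _ _ _ _ _ A C), (dy_uniq _ _ _ _ _ B D); reflexivity. Qed.

Lemma norm_nz (z : Cplx) : z <> RtoC 0 -> fst z ^ 2 + snd z ^ 2 <> 0.
Proof. destruct z as [p q]; unfold RtoC; simpl; intros H E. apply H.
  assert (p = 0) by nra. assert (q = 0) by nra. subst; reflexivity. Qed.

Lemma Cring : ring_theory (RtoC 0) (RtoC 1) Cadd Cmul Csub Copp (@eq Cplx).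
Proof. constructor; intros; ceq. Qed.

Lemma Cfield : field_theory (RtoC 0) (RtoC 1) Cadd Cmul Csub Copp Cdiv Cinv (@eq Cplx).
Proof. constructor.
  - exact Cring.
  - unfold RtoC; intro H; injection H; lra.
  - reflexivity.
  - intros [p q] H. pose proof (norm_nz _ H) as N. simpl in N.
    unfold Cinv, Cmul, RtoC; simpl. f_equal; field; intro E; apply N; lra.
Qed.

Definition Cpow (z : Cplx) (n : N) : Cplx := pow_N (RtoC 1) Cmul z n.
Lemma Cpow_th : power_theory (RtoC 1) Cmul (@eq Cplx) (fun n => n) Cpow.
Proof. constructor. intros; reflexivity. Qed.
Ltac Cpow_tac t := match isNcst t with false => constr:(InitialRing.NotConstant) | _ => constr:(t) end.

Add Field CplxField : Cfield (power_tac Cpow_th [Cpow_tac]).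

Lemma Ci2 : Cpow Ci 2 = Copp (RtoC 1). Proof. unfold Cpow; simpl; ceq. Qed.
Lemma Ci3 : Cpow Ci 3 = Copp Ci. Proof. unfold Cpow; simpl; ceq. Qed.
Lemma Ci4 : Cpow Ci 4 = RtoC 1. Proof. unfold Cpow; simpl; ceq. Qed.
Lemma Ci5 : Cpow Ci 5 = Ci. Proof. unfold Cpow; simpl; ceq. Qed.
Lemma Ci6 : Cpow Ci 6 = Copp (RtoC 1). Proof. unfold Cpow; simpl; ceq. Qed.

Lemma Ci7 : Cpow Ci 7 = Copp Ci. Proof. unfold Cpow; simpl; ceq. Qed.
Lemma Ci8 : Cpow Ci 8 = RtoC 1. Proof. unfold Cpow; simpl; ceq. Qed.
Lemma expinv t : RtoC (exp (- t)) = Cinv (RtoC (exp t)).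
Proof. unfold RtoC, Cinv; simpl. rewrite exp_Ropp. pose proof (exp_pos t). f_equal; field; lra. Qed.
Lemma half_eq : half = Cinv (Cadd (RtoC 1) (RtoC 1)).
Proof. unfold half, RtoC, Cinv, Cadd; simpl; f_equal; field. Qed.
Lemma two_eq : RtoC 2 = Cadd (RtoC 1) (RtoC 1).
Proof. unfold RtoC, Cadd; simpl; f_equal; ring. Qed.
Lemma two_nz : Cadd (RtoC 1) (RtoC 1) <> RtoC 0.
Proof. unfold RtoC, Cadd; simpl; intro H; injection H; lra. Qed.
Lemma exp_nz t : RtoC (exp t) <> RtoC 0.
Proof. unfold RtoC; intro H; injection H; pose proof (exp_pos t); lra. Qed.

  Ltac chain := repeat (first [eassumption | apply dz_cst | apply dzb_cst |
     eapply dz_mul | eapply dz_add | eapply dz_sub |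
     eapply dzb_mul | eapply dzb_add | eapply dzb_sub]).
  Ltac alg x y := cbv beta; unfold emu, eu; rewrite ?expinv, ?half_eq, ?two_eq;
    repeat match goal with |- context [RtoC (exp ?t)] => generalize (exp_nz t); generalize (RtoC (exp t)); intros end;
    repeat match goal with |- context [?f x y] => is_var f; match type of f with R -> R -> Cplx => generalize (f x y); intro end end;
    field_simplify_eq; [ring_simplify; rewrite ?Ci2, ?Ci3, ?Ci4, ?Ci5, ?Ci6, ?Ci7, ?Ci8; ring | ..];
    repeat split; auto using two_nz.

Theorem proposition3
  (u : R -> R -> R) (a lam : Cplx) (p1 p2 q1 q2 psi1 psi2 : R -> R -> Cplx)
  (Hsmooth : smooth2 u) (Hsg : sinh_gordon u)
  (Ha : a <> RtoC 0) (Hlam : lam <> RtoC 0) (Hlama : lam <> a)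
  (Hpsia : PsiSys u a p1 p2) (Hphia : PhiSys u a q1 q2)
  (Hpsi : PsiSys u lam psi1 psi2) :
  let xi11 := fun x y => (p1 x y * q1 x y)%C in
  let xi12 := fun x y => (p1 x y * q2 x y)%C in
  let xi21 := fun x y => (p2 x y * q1 x y)%C in
  let xi22 := fun x y => (p2 x y * q2 x y)%C in
  let ud := fun x y => (xi11 x y - xi22 x y)%C in
  let c := Cinv (lam - a)%C in
  let dpsi1 := fun x y =>
    (c * ((lam + a) * xi11 x y * psi1 x y + RtoC 2 * lam * xi12 x y * psi2 x y))%C in
  let dpsi2 := fun x y =>
    (c * (RtoC 2 * a * xi21 x y * psi1 x y + (lam + a) * xi22 x y * psi2 x y))%C in
  forall x y, exists du dbu dud dbud,
    is_dz (Cfun u) x y du /\ is_dzb (Cfun u) x y dbu /\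
    is_dz ud x y dud /\ is_dzb ud x y dbud /\
    is_dz dpsi1 x y
      (half * (du * dpsi1 x y + Ci * emu u x y * dpsi2 x y)
       + half * (dud * psi1 x y - Ci * ud x y * emu u x y * psi2 x y))%C /\
    is_dz dpsi2 x y
      (half * (Ci * Cinv lam * eu u x y * dpsi1 x y - du * dpsi2 x y)
       + half * (Ci * ud x y * Cinv lam * eu u x y * psi1 x y - dud * psi2 x y))%C /\
    is_dzb dpsi1 x y
      (half * (- dbu * dpsi1 x y + Ci * lam * eu u x y * dpsi2 x y)
       + half * (- dbud * psi1 x y + Ci * ud x y * lam * eu u x y * psi2 x y))%C /\
    is_dzb dpsi2 x y
      (half * (Ci * emu u x y * dpsi1 x y + dbu * dpsi2 x y)
       + half * (- (Ci * ud x y * emu u x y) * psi1 x y + dbud * psi2 x y))%C.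
Proof.
  cbv zeta; intros x y.
  destruct (Hpsia x y) as [du [dbu [Hdu [Hdbu [Hp1 [Hp2 [Hp1b Hp2b]]]]]]].
  destruct (Hphia x y) as [duB [dbuB [HduB [HdbuB [Hq1 [Hq2 [Hq1b Hq2b]]]]]]].
  destruct (Hpsi x y) as [duC [dbuC [HduC [HdbuC [Hs1 [Hs2 [Hs1b Hs2b]]]]]]].
  rewrite (dz_uniq _ _ _ _ _ HduB Hdu) in *.
  rewrite (dz_uniq _ _ _ _ _ HduC Hdu) in *.
  rewrite (dzb_uniq _ _ _ _ _ HdbuB Hdbu) in *.
  rewrite (dzb_uniq _ _ _ _ _ HdbuC Hdbu) in *.
  assert (Hla : (lam - a)%C <> RtoC 0).
  { destruct lam, a; unfold Csub, Cadd, Copp, RtoC; simpl; intro E; apply Hlama;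
    injection E; intros; f_equal; lra. }
  pose proof (norm_nz _ Ha) as Na. pose proof (norm_nz _ Hlam) as Nl.
  pose proof (norm_nz _ Hla) as Nla.

  do 4 eexists.
  split; [exact Hdu|]. split; [exact Hdbu|].
  split. { apply dz_sub; apply dz_mul; eassumption. }
  split. { apply dzb_sub; apply dzb_mul; eassumption. }
  split. { eapply dz_eq; [chain|]. alg x y. }
  split. { eapply dz_eq; [chain|]. alg x y. }
  split. { eapply dzb_eq; [chain|]. alg x y. }
  { eapply dzb_eq; [chain|]. alg x y. }
Qed.
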